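(* Every conditional antimatroid is dismantlable, and every ample class of VC-dimension at most $2$ is dismantlable.
   Context: $X$ is a finite set and a concept class is $C\subseteq 2^X$. $Y$ is shattered by $C$ if $\{c\cap Y:c\in C\}=2^Y$; VC-dimension is the maximum size of a shattered set. A cube of $2^X$ is $\{T\cup Z:Z\subseteq Y\}$ with $Y\subseteq X$, $T\subseteq X\setminus Y$ ($Y$ its support); $C$ is ample if every set shattered by $C$ is the support of a cube contained in $C$. $C$ is dismantlable if it admits an ordering $c_1,\dots,c_m$ of all its concepts such that every level set $\{c_1,\dots,c_i\}$ is ample (equivalently, each $c_i$ is a corner of $\{c_1,\dots,c_i\}$, i.e. lies in exactly one inclusion-maximal cube contained in it). A conditional antimatroid is a class $C$ with $\varnothing\in C$, closed under intersection, such that every $c\in C$ is the smallest member of $C$ containing $\mathrm{ex}(c)$, where $\mathrm{ex}(c)=\{x\in c: c\setminus\{x\}\in C\}$ is the set of extremal points of $c$. *)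

(* Defs.v *)
(* The finite ground set X is a finType T; concepts are
   {set T}; a concept class is C : {set {set T}}. *)
From mathcomp Require Import all_boot.
Set Implicit Arguments. Unset Strict Implicit. Unset Printing Implicit Defensive.

Section Defs.
Variable T : finType.

Definition shatters (C : {set {set T}}) (Y : {set T}) : bool :=
  [set c :&: Y | c in C] == powerset Y.

Definition vc_dim (C : {set {set T}}) : nat :=
  \max_(Y : {set T} | shatters C Y) #|Y|.

Definition cube (Y T0 : {set T}) : {set {set T}} :=
  [set T0 :|: Z | Z in powerset Y].

Definition ample (C : {set {set T}}) : Prop :=
  forall Y : {set T}, shatters C Y ->
    exists T0 : {set T}, T0 \subset ~: Y /\ cube Y T0 \subset C.

Definition dismantlable (C : {set {set T}}) : Prop :=
  exists s : seq {set T},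
    [/\ uniq s, (forall c, (c \in s) = (c \in C)) &
        forall i, 0 < i <= size s -> ample [set c in take i s]].

Definition ex_pts (C : {set {set T}}) (c : {set T}) : {set T} :=
  [set x in c | (c :\ x) \in C].

Definition cond_antimatroid (C : {set {set T}}) : Prop :=
  [/\ set0 \in C,
      (forall c d, c \in C -> d \in C -> c :&: d \in C) &
      forall c, c \in C ->
        ex_pts C c \subset c /\
        forall d, d \in C -> ex_pts C c \subset d -> c \subset d].
End Defs.

(* Main.v *)
Require Import Defs.
From mathcomp Require Import all_boot.
Set Implicit Arguments. Unset Strict Implicit. Unset Printing Implicit Defensive.

Section Ample.
Variable T : finType.
Implicit Types (C D : {set {set T}}) (b c d e Y Z W A B P S : {set T}).

Definition sd A B : {set T} := [set x | (x \in A) (+) (x \in B)].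
Lemma in_sd x A B : (x \in sd A B) = (x \in A) (+) (x \in B).
Proof. by rewrite inE. Qed.
Lemma sdK A B : sd (sd A B) B = A.
Proof. by apply/setP=> x; rewrite !in_sd; case: (x \in A); case: (x \in B). Qed.
Lemma sdC A B : sd A B = sd B A.
Proof. by apply/setP=> x; rewrite !in_sd; case: (x \in A); case: (x \in B). Qed.
Lemma sd0 A : sd A set0 = A.
Proof. by apply/setP=> x; rewrite !in_sd inE; case: (x \in A). Qed.
Lemma sd_id A B : (sd A B == A) = (B == set0).
Proof.
apply/eqP/eqP=> [h|->]; last exact: sd0.
apply/setP=> x; have := congr1 (fun S : {set T} => x \in S) h; rewrite /= in_sd inE.
by case: (x \in A); case: (x \in B).
Qed.

Lemma shattersP C Y :
  reflect (forall P : {set T}, P \subset Y -> exists2 c, c \in C & c :&: Y = P) (shatters C Y).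
Proof.
apply: (iffP eqP) => [h P PY | h].
  have : P \in powerset Y by rewrite powersetE.
  by rewrite -h => /imsetP [c cC ->]; exists c.
apply/setP=> P; rewrite powersetE; apply/imsetP/idP => [[c _ ->]|/h [c cC <-]].
  exact: subsetIr.
by exists c.
Qed.


Definition cubeat C b Y := forall W, W \subset Y -> sd b W \in C.

Lemma notin_sub (W Y : {set T}) z : W \subset Y -> z \in Y = false -> z \in W = false.
Proof. by move=> /subsetP WY zY; apply: contraFF zY => /WY. Qed.

Lemma sd_subset b W Y : W \subset Y -> (sd b W) :\: Y = b :\: Y.
Proof.
move=> WY; apply/setP=> z; rewrite !(inE, in_sd).
case zY: (z \in Y) => //=; rewrite (notin_sub WY zY); by case: (z \in b).
Qed.

Lemma sd_capsub b Y P : P \subset Y -> sd (b :&: Y) P \subset Y.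
Proof.
move=> PY; apply/subsetP=> z; rewrite !(inE, in_sd).
case zY: (z \in Y) => //; by rewrite (notin_sub PY zY) andbF.
Qed.


Lemma sd_cap b Y P : P \subset Y -> (sd b (sd (b :&: Y) P)) :&: Y = P.
Proof.
move=> PY; apply/setP=> z; rewrite !(inE, in_sd).
case zY: (z \in Y); last by rewrite andbF (notin_sub PY zY).
by rewrite !andbT; case: (z \in b); case: (z \in P).
Qed.

Lemma ampleP C :
  ample C <-> forall Y, shatters C Y -> exists b, cubeat C b Y.
Proof.
split=> h Y /h.
  move=> [T0 [T0Y /subsetP cC]] ; exists T0 => W WY; apply: cC.
  apply/imsetP; exists W; first by rewrite powersetE.
  apply/setP=> z; rewrite !(inE, in_sd).
  case zW: (z \in W); last by rewrite orbF; case: (z \in T0).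
  have zY := subsetP WY z zW; move: (subsetP T0Y z); rewrite inE zY /=.
  by case: (z \in T0) => //= /(_ isT).
move=> [b cb]; exists (b :\: Y); split.
  by apply/subsetP=> z; rewrite !inE => /andP [].
apply/subsetP=> e /imsetP [Z]; rewrite powersetE => ZY ->.
have -> : b :\: Y :|: Z = sd b (sd (b :&: Y) Z).
  apply/setP=> z; rewrite !(inE, in_sd).
  case zY: (z \in Y); last by rewrite (notin_sub ZY zY) andbF orbF /=; case: (z \in b).
  by rewrite /= andbT; case: (z \in b); case: (z \in Z).
by apply: cb; apply: sd_capsub.
Qed.

Lemma cubeat_shatters C b Y : cubeat C b Y -> shatters C Y.
Proof.
move=> cb; apply/shattersP=> P PY; exists (sd b (sd (b :&: Y) P)).
  by apply: cb; apply: sd_capsub.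
exact: sd_cap.
Qed.

Lemma cubeat_sub C b Y Y' : cubeat C b Y -> Y' \subset Y -> cubeat C b Y'.
Proof. by move=> cb sY W WY; apply: cb; apply: subset_trans sY. Qed.

Lemma sdA A B S : sd (sd A B) S = sd A (sd B S).
Proof. by apply/setP=> z; rewrite !in_sd; case: (z \in A); case: (z \in B); case: (z \in S). Qed.

Lemma sd_sub W0 W Y : W0 \subset Y -> W \subset Y -> sd W0 W \subset Y.
Proof.
move=> /subsetP h1 /subsetP h2; apply/subsetP=> z; rewrite in_sd.
by case zW0: (z \in W0) => /=; [move=> _; apply: h1 | move=> /h2].
Qed.

Lemma cubeat_shift C b Y W0 : cubeat C b Y -> W0 \subset Y -> cubeat C (sd b W0) Y.
Proof. by move=> cb W0Y W WY; rewrite sdA; apply: cb; apply: sd_sub. Qed.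

Lemma cubeat_mono C D b Y : C \subset D -> cubeat C b Y -> cubeat D b Y.
Proof. by move=> /subsetP CD cb W /cb /CD. Qed.

Lemma shatters_mono C D Y : C \subset D -> shatters C Y -> shatters D Y.
Proof.
move=> /subsetP CD /shattersP h; apply/shattersP=> P /h [c /CD cD <-]; by exists c.
Qed.

Lemma cubeat0 C b : b \in C -> cubeat C b set0.
Proof. by move=> bC W; rewrite subset0 => /eqP ->; rewrite sd0. Qed.


Definition hs C x (v : bool) := [set e in C | (x \in e) == v].

Lemma hs_sub C x v : hs C x v \subset C.
Proof. by apply/subsetP=> e; rewrite inE => /andP []. Qed.

Lemma in_hs C x v e : (e \in hs C x v) = (e \in C) && ((x \in e) == v).
Proof. by rewrite inE. Qed.

Lemma shatters_notin C x v Y : shatters (hs C x v) Y -> x \notin Y.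
Proof.
move=> /shattersP sh; apply/negP=> xY.
have PY : (if v then set0 else [set x]) \subset Y.
  by case: (v); rewrite ?sub0set ?sub1set.
have [e] := sh _ PY; rewrite in_hs => /andP [_ /eqP ex] /setP /(_ x).
by move: ex; case: (v) => ex; rewrite !inE xY ex ?eqxx.
Qed.

Lemma hs_ample C x v : ample C -> ample (hs C x v).
Proof.
move/ampleP=> aC; apply/ampleP=> Y shY.
have xY := shatters_notin shY.
have nW : forall W, W \subset Y -> x \in W = false.
  by move=> W WY; apply: notin_sub WY _; apply/negbTE.
have [b cb] := aC Y (shatters_mono (hs_sub C x v) shY).
case bx: ((x \in b) == v).
  exists b => W WY; rewrite in_hs cb //= in_sd (nW W WY) addbF.
  done.
have shx : shatters C (x |: Y).
  apply/shattersP=> P PxY.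
  have PY : P :\ x \subset Y.
    apply/subsetP=> z; rewrite !inE => /andP [zx zP].
    by move: (subsetP PxY z zP); rewrite !inE (negbTE zx).
  case Px: ((x \in P) == v).
    have [e] := shattersP _ _ shY _ PY; rewrite in_hs => /andP [eC /eqP ex] eY.
    exists e => //; apply/setP=> z; rewrite !inE.
    case: (eqVneq z x) => [->|zx] /=; first by rewrite andbT ex (eqP Px).
    by move/setP: eY => /(_ z); rewrite !inE zx /= => ->.
  exists (sd b (sd (b :&: Y) (P :&: Y))); first by apply: cb; apply: sd_capsub; apply: subsetIr.
  apply/setP=> z; rewrite !inE.
  case: (eqVneq z x) => [->|zx] /=.
    rewrite (negbTE xY) !andbF !addbF andbT.
    by move: bx Px; case: (x \in b); case: (x \in P); case: (v).
  move: (sd_cap b (subsetIr P Y)) => /setP /(_ z); rewrite !inE => ->.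
  case zP: (z \in P); rewrite ?andbT //; by move: (subsetP PxY z zP); rewrite !inE (negbTE zx).
have [b' cb'] := aC _ shx.
have xx : [set x] \subset x |: Y by rewrite sub1set setU11.
exists (if (x \in b') == v then b' else sd b' [set x]) => W WY.
have WxY : W \subset x |: Y by apply: subset_trans WY (subsetUr _ _).
rewrite in_hs; apply/andP; split.
  case: ifP => _; first exact: cb'.
  by apply: (cubeat_shift cb' xx).
rewrite in_sd (nW W WY) addbF.
by case: ifP => [/eqP //|]; rewrite in_sd !inE eqxx; case: (x \in b'); case: (v).
Qed.


Definition secS C b (s : seq T) := foldr (fun z D => hs D z (z \in b)) C s.

Lemma secS_ample C b s : ample C -> ample (secS C b s).
Proof. by move=> aC; elim: s => //= z s IH; apply: hs_ample. Qed.

Lemma in_secS C b s e :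
  (e \in secS C b s) = (e \in C) && all (fun z => (z \in e) == (z \in b)) s.
Proof.
elim: s => /= [|z s IH]; first by rewrite andbT.
rewrite in_hs IH; by case: (e \in C); case: ((z \in e) == _); case: (all _ _).
Qed.

Definition sec C b W := secS C b (enum (~: W)).

Lemma sec_ample C b W : ample C -> ample (sec C b W).
Proof. exact: secS_ample. Qed.

Lemma in_sec C b W e : (e \in sec C b W) = (e \in C) && (sd e b \subset W).
Proof.
rewrite /sec in_secS; congr (_ && _).
apply/allP/subsetP=> [h z|h z]; rewrite ?mem_enum ?in_sd.
  by apply: contraTT => zW; have := h z; rewrite mem_enum inE zW => /(_ isT) /eqP ->; rewrite addbb.
rewrite inE => zW; apply/eqP; apply: contraNeq zW => ne; apply: h.
by rewrite in_sd; move: ne; case: (z \in e); case: (z \in b).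
Qed.


Lemma sd_inj A B S : sd A B = sd A S -> B = S.
Proof. by move=> h; rewrite -(sdK B A) -(sdK S A) !(sdC _ A) h. Qed.

Lemma sd_self A : sd A A = set0.
Proof. by apply/setP=> z; rewrite !inE addbb. Qed.

Lemma sd_eq0 A B : (sd A B == set0) = (A == B).
Proof.
apply/eqP/eqP=> [h|->]; last exact: sd_self.
by apply/setP=> z; move/setP: h => /(_ z); rewrite !inE; case: (z \in A); case: (z \in B).
Qed.

Lemma local_isom C c d : ample C -> c \in C -> d \in C -> c != d ->
  exists2 y, y \in sd c d & sd c [set y] \in C.
Proof.
move=> aC cC dC cd.
pose F := [set e in C | (e != c) && (sd c e \subset sd c d)].
have dF : d \in F by rewrite /F inE dC eq_sym cd subxx.
case: (arg_minnP (fun e => #|sd c e|) dF) => d' d'F d'min.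
have : d' \in F by []. rewrite /F inE => /and3P [d'C d'c d'sub].
pose W := sd c d'.
have D2sub : forall e, e \in sec C c W -> (e == c) || (e == d').
  move=> e; rewrite in_sec => /andP [eC esub].
  case: eqP => //= /eqP ec.
  have eF : e \in F by rewrite /F inE eC ec sdC (subset_trans esub d'sub).
  have := d'min e eF; rewrite -/W => le.
  have eqW : sd c e = W.
    by apply/eqP; rewrite eqEcard le andbT sdC.
  by apply/eqP; apply: sd_inj eqW.
have [y yW] : exists y, y \in W.
  by apply/set0Pn; rewrite sd_eq0 eq_sym.
have sh : shatters (sec C c W) [set y].
  have yd' : (y \in d') = ~~ (y \in c) by move: yW; rewrite in_sd; case: (y \in c); case: (y \in d').
  have cE : forall e, e \in sec C c W -> (y \in e) = (y \in c) -> e :&: [set y] = c :&: [set y].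
    by move=> e _ h; apply/setP=> z; rewrite !inE; case: eqP => [->|_]; rewrite ?andbF // h.
  apply/shattersP=> P; rewrite subset1 => /orP [] /eqP ->.
    case yc: (y \in c).
      exists c; first by rewrite in_sec cC sd_self sub0set.
      by apply/setP=> z; rewrite !inE; case: eqP => [->|_]; rewrite ?andbF // yc.
    exists d'; first by rewrite in_sec d'C sdC subxx.
    by apply/setP=> z; rewrite !inE; case: eqP => [->|_]; rewrite ?andbF // yd' yc.
  case yc: (y \in c).
    exists d'; first by rewrite in_sec d'C sdC subxx.
    by apply/setP=> z; rewrite !inE; case: eqP => [->|_]; rewrite ?andbF // yd' yc.
  exists c; first by rewrite in_sec cC sd_self sub0set.
  by apply/setP=> z; rewrite !inE; case: eqP => [->|_]; rewrite ?andbF // yc.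
have aD : ample (sec C c W) := sec_ample aC.
have [b cb] := (proj1 (ampleP _) aD) _ sh.
have b0 := cb set0 (sub0set _); rewrite sd0 in b0.
have b1 := cb [set y] (subxx _).
have Wy : W = [set y].
  move: (D2sub _ b0) (D2sub _ b1) => /orP [] /eqP e1 /orP [] /eqP e2.
  - by move: e2; rewrite -e1 -{2}(sd0 b) => /sd_inj /setP /(_ y); rewrite !inE eqxx.
  - by rewrite /W -e2 -e1 -sdA sd_self sdC sd0.
  - by rewrite /W -e2 -e1 sdC -sdA sd_self sdC sd0.
  - by move: e2; rewrite -e1 -{2}(sd0 b) => /sd_inj /setP /(_ y); rewrite !inE eqxx.
exists y; first exact: (subsetP d'sub).
suff -> : sd c [set y] = d' by [].
by rewrite -Wy /W -sdA sd_self sdC sd0.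
Qed.


Lemma sdKl A B : sd A (sd A B) = B.
Proof. by rewrite -sdA sd_self sdC sd0. Qed.

Definition nbr C c := [set y | sd c [set y] \in C].
Definition corner C c := (c \in C) /\ cubeat C c (nbr C c).

Lemma corner_ample C c : ample C -> corner C c -> ample (C :\ c).
Proof.
move=> aC [cC cc]; apply/ampleP => Y shY.
have shC := shatters_mono (subsetDl C [set c]) shY.
have [b cb] := proj1 (ampleP C) aC Y shC.
case sub: (sd b c \subset Y); last first.
  exists b => W WY; rewrite !inE cb // andbT.
  apply/eqP=> e; move: sub; by rewrite -e sdKl WY.
have cY : cubeat C c Y by have := cubeat_shift cb sub; rewrite sdKl.
have Ynbr : Y \subset nbr C c.
  by apply/subsetP=> y yY; rewrite inE; apply: cY; rewrite sub1set.
case: (boolP (nbr C c \subset Y)) => [nY|].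
  have [d] := shattersP _ _ shY (c :&: Y) (subsetIr _ _).
  rewrite !inE => /andP [dc dC] dY.
  have cd : c != d by rewrite eq_sym.
  have [y yd yC] := local_isom aC cC dC cd.
  have yY : y \in Y by apply: (subsetP nY); rewrite inE.
  move/setP: dY => /(_ y); rewrite !inE yY !andbT => e.
  by move: yd; rewrite in_sd e addbb.
move=> /subsetPn [s sN sY].
exists (sd c [set s]) => W WY.
have WsN : sd [set s] W \subset nbr C c.
  by apply: sd_sub; rewrite ?sub1set //; apply: subset_trans Ynbr.
rewrite !inE sdA cc // andbT.
apply/eqP=> /eqP; rewrite sd_id => /eqP /setP /(_ s).
rewrite !inE eqxx /=.
by have -> : (s \in W) = false by apply: contraNF sY => /(subsetP WY).
Qed.


Definition vc_le k C := forall Y, shatters C Y -> #|Y| <= k.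

Lemma vc_le_mono k C D : D \subset C -> vc_le k C -> vc_le k D.
Proof. by move=> DC h Y /(shatters_mono DC) /h. Qed.

Lemma shatters1_0 b Y : shatters [set b] Y -> Y = set0.
Proof.
move=> /shattersP sh; apply/eqP; apply: contraT => /set0Pn [y yY].
have [e1] := sh set0 (sub0set _); rewrite inE => /eqP -> /setP /(_ y).
have y1 : [set y] \subset Y by rewrite sub1set.
have [e2] := sh [set y] y1; rewrite inE => /eqP -> /setP /(_ y).
by rewrite !inE eqxx yY /= andbT => ->.
Qed.

Lemma single_ample b : ample [set b].
Proof.
apply/ampleP=> Y /shatters1_0 ->; exists b; apply: cubeat0; exact: set11.
Qed.

Lemma single_vc b : vc_le 1 [set b].
Proof. by move=> Y /shatters1_0 ->; rewrite cards0. Qed.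

Lemma sd1_neq c y : (sd c [set y] == c) = false.
Proof. by rewrite sd_id; apply/negbTE/set0Pn; exists y; rewrite set11. Qed.

Definition carrier C x v := [set e in hs C x v | sd e [set x] \in C].

Lemma carrier_sub C x v : carrier C x v \subset hs C x v.
Proof. by apply/subsetP=> e; rewrite inE => /andP []. Qed.

Lemma carrier_shatters C x v Y :
  shatters (carrier C x v) Y -> x \notin Y /\ shatters C (x |: Y).
Proof.
move=> shY; have xY := shatters_notin (shatters_mono (carrier_sub C x v) shY).
split=> //; apply/shattersP=> P PxY.
have PY : P :\ x \subset Y.
  apply/subsetP=> z; rewrite !inE => /andP [zx zP].
  by move: (subsetP PxY z zP); rewrite !inE (negbTE zx).
have [e] := shattersP _ _ shY _ PY; rewrite !inE => /andP [/andP [eC /eqP ex] efC] eY.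
have key : forall z, z != x -> (z \in e) && (z \in Y) = (z \in P).
  by move=> z zx; move/setP: eY => /(_ z); rewrite !inE zx.
case Px: ((x \in P) == v).
  exists e => //; apply/setP=> z; rewrite !inE.
  case: (eqVneq z x) => [->|zx] /=; first by rewrite andbT ex (eqP Px).
  exact: key.
exists (sd e [set x]) => //; apply/setP=> z; rewrite !inE.
case: (eqVneq z x) => [->|zx] /=.
  by rewrite andbT ex; move: Px; case: (x \in P); case: (v).
by rewrite addbF key.
Qed.

Lemma carrier_ample C x v : ample C -> ample (carrier C x v).
Proof.
move/ampleP=> aC; apply/ampleP=> Y shY.
have [xY shx] := carrier_shatters shY.
have nW : forall W, W \subset Y -> x \in W = false.
  by move=> W WY; apply: notin_sub WY _; apply/negbTE.
have [b' cb'] := aC _ shx.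
have xx : [set x] \subset x |: Y by rewrite sub1set setU11.
pose b'' := if (x \in b') == v then b' else sd b' [set x].
have cb'' : cubeat C b'' (x |: Y).
  by rewrite /b''; case: ifP => _ //; apply: cubeat_shift.
exists b'' => W WY.
have WxY : W \subset x |: Y by apply: subset_trans WY (subsetUr _ _).
rewrite !inE cb'' //=; apply/andP; split.
  rewrite (nW W WY) addbF /b''.
  by case: ifP => [/eqP //|]; rewrite in_sd !inE eqxx; case: (x \in b'); case: (v).
rewrite sdA; apply: cb''; apply: sd_sub => //.
Qed.

Lemma carrier_vc C x v : vc_le 2 C -> vc_le 1 (carrier C x v).
Proof.
move=> vC Y /carrier_shatters [xY /vC]; rewrite cardsU1 xY.
by [].
Qed.


Lemma nbr_hs C x v c y : c \in hs C x v -> y != x ->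
  (y \in nbr C c) = (y \in nbr (hs C x v) c).
Proof.
move=> cH yx; rewrite !inE [x == y]eq_sym (negbTE yx) addbF.
by move: cH; rewrite in_hs => /andP [_ ->]; rewrite andbT.
Qed.

Lemma nbr_mono C D c : D \subset C -> nbr D c \subset nbr C c.
Proof. by move=> /subsetP DC; apply/subsetP=> y; rewrite !inE => /DC. Qed.

Lemma corner_hs_out C x v c : corner (hs C x v) c -> sd c [set x] \notin C -> corner C c.
Proof.
move=> [cH cc] nx; split; first exact: (subsetP (hs_sub C x v)).
apply: (cubeat_mono (hs_sub C x v)); apply: (cubeat_sub cc).
apply/subsetP=> y yN; have yx : y != x.
  by apply: contraNneq nx => e; move: yN; rewrite inE e.
by rewrite -nbr_hs.
Qed.

Lemma corner_hs_in C x v c : corner (hs C x v) c -> hs C x v \subset carrier C x v ->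
  corner C c.
Proof.
move=> [cH cc] HM; split; first exact: (subsetP (hs_sub C x v)).
move=> W WN.
have W'N : W :\ x \subset nbr (hs C x v) c.
  apply/subsetP=> y; rewrite in_setD1 => /andP [yx yW].
  by rewrite -nbr_hs // (subsetP WN).
have e'H := cc _ W'N.
case xW: (x \in W).
  have -> : sd c W = sd (sd c (W :\ x)) [set x].
    apply/setP=> z; rewrite !inE; case: (eqVneq z x) => [->|zx] /=.
      by rewrite xW addbF.
    by rewrite addbF.
  by move: (subsetP HM _ e'H); rewrite inE => /andP [].
have -> : W = W :\ x.
  by apply/setP=> z; rewrite !inE; case: (eqVneq z x) => [->|]; rewrite ?xW.
exact: (subsetP (hs_sub C x v)).
Qed.


Lemma in_carrier C x v e :
  (e \in carrier C x v) = (e \in hs C x v) && (sd e [set x] \in C).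
Proof. by rewrite /carrier [in LHS]inE. Qed.

Lemma x_sd1 c x y : (x \in sd c [set y]) = (x \in c) (+) (x == y).
Proof. by rewrite in_sd inE. Qed.

Lemma R_main n : forall C N, #|C| <= n -> ample C -> vc_le 2 C -> ample N ->
  vc_le 1 N -> N \subset C -> ~~ (C \subset N) -> exists2 c, corner C c & c \notin N.
Proof.
elim: n => [|n IH] C N cardC aC vC aN vN NC CN.
  by move: cardC; rewrite leqn0 cards_eq0 => /eqP C0; rewrite C0 sub0set in CN.
have [e eC eN] := subsetPn CN.
have HS : forall x v, ~~ (C \subset hs C x v) -> ~~ (hs C x v \subset N) ->
    (forall f, f \in N -> f \in hs C x v -> sd f [set x] \in C) ->
    exists2 c, corner C c & c \notin N.
  move=> x v HC HN NH.
  have cH : #|hs C x v| <= n.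
    have : hs C x v \proper C by rewrite properE hs_sub HC.
    by move/proper_card => lt; rewrite -ltnS (leq_trans lt cardC).
  have aH : ample (hs C x v) := hs_ample aC.
  have vH := vc_le_mono (hs_sub C x v) vC.
  case: (boolP (hs C x v \subset carrier C x v)) => HM.
    have sNH : hs N x v \subset hs C x v.
      by apply/subsetP=> f; rewrite !in_hs => /andP [fN ->]; rewrite (subsetP NC).
    have HnN : ~~ (hs C x v \subset hs N x v).
      by apply: contra HN => /subset_trans; apply; apply: hs_sub.
    have aNH : ample (hs N x v) := hs_ample aN.
    have [c cc cN] := IH _ _ cH aH vH aNH
      (vc_le_mono (hs_sub N x v) vN) sNH HnN.
    exists c; first exact: corner_hs_in cc HM.
    apply: contra cN => cN'; move: (cc.1); rewrite !in_hs cN' => /andP [_ ->].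
    by [].
  have aM : ample (carrier C x v) := carrier_ample aC.
  have vM : vc_le 1 (carrier C x v) := carrier_vc vC.
  have [c cc cM] := IH _ _ cH aH vH aM vM (carrier_sub C x v) HM.
  exists c.
    apply: (corner_hs_out cc); apply: contra cM => fx.
    by rewrite in_carrier cc.1 fx.
  apply: contra cM => cN; rewrite in_carrier cc.1 NH //; exact: cc.1.
have small : forall f, f \in C -> f != e -> N \subset [set f] ->
    exists2 c, corner C c & c \notin N.
  move=> f fC fe Nf.
  have [x xef] : exists x, x \in sd e f.
    by apply/set0Pn; rewrite sd_eq0 eq_sym.
  have xfe : (x \in f) = ~~ (x \in e).
    by move: xef; rewrite in_sd; case: (x \in e); case: (x \in f).
  apply: (HS x (x \in e)).
  - apply/subsetPn; exists f => //; rewrite in_hs fC xfe /=.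
    by case: (x \in e).
  - apply/subsetPn; exists e => //; by rewrite in_hs eC eqxx.
  - move=> f' f'N; have := subsetP Nf _ f'N; rewrite inE => /eqP ->.
    by rewrite in_hs xfe; case: (x \in e); rewrite andbF.
case: (eqVneq N set0) => [N0|/set0Pn [v0 v0N]].
  case: (boolP (C \subset [set e])) => Ce.
    exists e; last by [].
    split => //.
    have -> : nbr C e = set0.
      apply/setP=> y; rewrite !inE; apply/negbTE/negP => /(subsetP Ce).
      by rewrite inE sd1_neq.
    exact: cubeat0.
  have [f fC] := subsetPn Ce; rewrite inE => fe.
  by apply: (small f fC fe); rewrite N0 sub0set.
case: (boolP (N \subset [set v0])) => Nv0.
  apply: (small v0 (subsetP NC _ v0N)) => //.
  by apply: contraNneq eN => <-.
have cardN : #|N| <= n.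
  have : N \proper C by rewrite properE NC CN.
  by move/proper_card => lt; rewrite -ltnS (leq_trans lt cardC).
have v0sub : [set v0] \subset N by rewrite sub1set.
have a1 : ample [set v0] := @single_ample v0.
have v1 : vc_le 1 [set v0] := @single_vc v0.
have [l lc lv0] := IH _ _ cardN aN (vc_le_mono NC vC) a1 v1 v0sub Nv0.
rewrite inE in lv0.
have lN := lc.1.
have [x Nx] : exists x, nbr N l = [set x].
  have [y yd yN] := local_isom aN lN v0N lv0.
  have yn : y \in nbr N l by rewrite inE.
  exists y; apply/esym/eqP; rewrite eqEcard sub1set yn cards1 /=.
  exact: vN _ (cubeat_shatters lc.2).
have lxN : sd l [set x] \in N.
  have : x \in nbr N l by rewrite Nx set11.
  by rewrite inE.
have NH : forall f, f \in N -> f \in hs C x (x \in l) -> f = l.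
  move=> f fN fH; apply/eqP; apply: contraT => fl.
  have aNH : ample (hs N x (x \in l)) := hs_ample aN.
  have lNH : l \in hs N x (x \in l) by rewrite in_hs lN eqxx.
  have fNH : f \in hs N x (x \in l).
    by move: fH; rewrite !in_hs fN => /andP [_ ->].
  have lf : l != f by rewrite eq_sym.
  have [y _] := local_isom aNH lNH fNH lf.
  rewrite in_hs => /andP [yN].
  have : y \in nbr N l by rewrite inE.
  rewrite Nx inE => /eqP ->; rewrite x_sd1 eqxx.
  by case: (x \in l).
case: (boolP (hs C x (x \in l) \subset N)) => HN; last first.
  apply: (HS x (x \in l)) => //.
    apply/subsetPn; exists (sd l [set x]); first exact: (subsetP NC).
    by rewrite in_hs x_sd1 eqxx; case: (x \in l); rewrite andbF.
  by move=> f fN /(NH f fN) ->; apply: (subsetP NC).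
have nCl : nbr C l \subset [set x].
  apply/subsetP=> y; rewrite !inE => yC; apply: contraT => yx.
  have xy : (x == y) = false by rewrite eq_sym; apply/negbTE.
  have : sd l [set y] \in hs C x (x \in l).
    by rewrite in_hs yC x_sd1 xy addbF eqxx.
  move/(subsetP HN) => yN; have := NH _ yN.
  rewrite in_hs yC x_sd1 xy addbF eqxx => /(_ isT) /eqP.
  by rewrite sd1_neq.
have lC : l \in C := subsetP NC _ lN.
have clC : corner C l.
  split => // W WN; have := subset_trans WN nCl; rewrite subset1 => /orP [] /eqP ->.
    exact: (subsetP NC).
  by rewrite sd0.
have aC' := corner_ample aC clC.
have aN' := corner_ample aN lc.
have el : e != l by apply: contraNneq eN => ->.
have cC' : #|C :\ l| <= n.
  by move: cardC; rewrite (cardsD1 l C) lC.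
have NC' : N :\ l \subset C :\ l by apply: setSD.
have CN' : ~~ (C :\ l \subset N :\ l).
  by apply/subsetPn; exists e; rewrite !inE ?el ?eC // negb_and eN orbT.
have [c cc cN'] := IH _ _ cC' aC' (vc_le_mono (subsetDl _ _) vC) aN'
  (vc_le_mono (subsetDl _ _) vN) NC' CN'.
have [cC'' cl] : c \in C /\ c != l.
  by move: cc.1; rewrite !inE => /andP [-> ->].
have cN : c \notin N.
  by apply: contra cN' => cN; rewrite !inE cl.
exists c => //; split => //.
have sN : nbr C c \subset nbr (C :\ l) c.
  apply/subsetP=> y; rewrite !inE => yC; rewrite yC andbT.
  apply/eqP=> e1.
  have : y \in nbr C l by rewrite inE -e1 sdK.
  move/(subsetP nCl); rewrite inE => /eqP yx.
  have : c = sd l [set x] by rewrite -yx -e1 sdK.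
  by move=> ce; move: cN; rewrite ce lxN.
exact: (cubeat_mono (subsetDl _ _) (cubeat_sub cc.2 sN)).
Qed.


Lemma dismantle_gen (Pr : {set {set T}} -> Prop) :
  (forall C, Pr C -> ample C) ->
  (forall C, Pr C -> C != set0 -> exists2 c, c \in C & Pr (C :\ c)) ->
  forall C, Pr C -> dismantlable C.
Proof.
move=> hA hR C; move: {2}#|C| (leqnn #|C|) => n.
elim: n C => [|n IH] C cC PC.
  exists [::]; split => // [c|i]; last by rewrite ltnNge => /andP [/negbTE ->].
  by move: cC; rewrite leqn0 cards_eq0 => /eqP ->; rewrite inE.
case: (eqVneq C set0) => [C0|Cn0].
  exists [::]; split => // [c|i]; last by rewrite ltnNge => /andP [/negbTE ->].
  by rewrite C0 inE.
have [c cC' Pc] := hR C PC Cn0.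
have cc : #|C :\ c| <= n.
  by move: cC; rewrite (cardsD1 c C) cC'.
have [s [us ms ps]] := IH _ cc Pc.
exists (rcons s c); split.
- by rewrite rcons_uniq us ms !inE eqxx.
- by move=> d; rewrite mem_rcons inE ms !inE; case: eqVneq => [->|]; rewrite ?cC'.
move=> i /andP [i0]; rewrite size_rcons leq_eqVlt => /orP [/eqP ->|].
  rewrite -cats1 take_oversize; last by rewrite size_cat addn1.
  have -> : [set d in s ++ [:: c]] = C.
    by apply/setP=> d; rewrite inE mem_cat inE ms !inE; case: eqVneq => [->|]; rewrite ?cC' ?orbF ?orbT.
  exact: hA.
rewrite ltnS => ile; rewrite -cats1 takel_cat //.
by apply: ps; rewrite i0.
Qed.

Lemma shatters_set0 Y : ~ shatters (set0 : {set {set T}}) Y.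
Proof. by move=> /shattersP /(_ set0 (sub0set _)) [c]; rewrite inE. Qed.

Lemma set0_ample : ample (set0 : {set {set T}}).
Proof. by move=> Y /shatters_set0. Qed.

Lemma set0_vc k : vc_le k (set0 : {set {set T}}).
Proof. by move=> Y /shatters_set0. Qed.

Lemma part2 C : ample C -> vc_le 2 C -> dismantlable C.
Proof.
move=> aC vC.
apply: (@dismantle_gen (fun C => ample C /\ vc_le 2 C)); last by split.
  by move=> D [].
move=> D [aD vD] Dn0.
have e0 : (set0 : {set {set T}}) \subset D by apply: sub0set.
have nD : ~~ (D \subset set0) by rewrite subset0.
have [c [cD cc] _] := R_main (leqnn #|D|) aD vD set0_ample (set0_vc 1) e0 nD.
exists c => //; split.
  exact: corner_ample.
exact: vc_le_mono (subsetDl _ _) vD.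
Qed.


Lemma ca_ample C : cond_antimatroid C -> ample C.
Proof.
case=> C0 CI Cex; apply/ampleP => Y shY.
pose F := [set d in C | Y \subset d].
have [d0 d0C d0Y] := shattersP _ _ shY Y (subxx _).
have d0F : d0 \in F by rewrite /F inE d0C -d0Y subsetIl.
case: (arg_minnP (fun d => #|d|) d0F) => c0 c0F c0min.
have : c0 \in F by []; rewrite /F inE => /andP [c0C Yc0].
have c0le : forall d, d \in C -> Y \subset d -> c0 \subset d.
  move=> d dC Yd; have cdF : c0 :&: d \in F by rewrite /F inE CI // subsetI Yc0 Yd.
  have := c0min _ cdF => le.
  have : c0 :&: d == c0 by rewrite eqEcard subsetIl le.
  by move/eqP => <-; apply: subsetIr.
have [exc0 gen] := Cex c0 c0C.
have exY : ex_pts C c0 \subset Y.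
  apply/subsetP=> x; rewrite inE => /andP [xc0 c0x]; apply: contraT => xY.
  have : c0 \subset c0 :\ x.
    apply: c0le => //; apply/subsetP=> z zY; rewrite !inE (subsetP Yc0) // andbT.
    by apply: contraNneq xY => <-.
  by move/subsetP/(_ x xc0); rewrite !inE eqxx.
have Yex : Y \subset ex_pts C c0.
  apply/subsetP=> y yY; apply: contraT => ynex.
  have [d dC dY] := shattersP _ _ shY (Y :\ y) (subsetDl _ _).
  have : c0 \subset d :&: c0.
    apply: gen; first by apply: CI.
    apply/subsetP=> x xex; rewrite inE (subsetP exc0) // andbT.
    have xY := subsetP exY _ xex.
    have : x \in Y :\ y by rewrite !inE xY andbT; apply: contraNneq ynex => <-.
    by rewrite -dY inE => /andP [].
  move/subsetP/(_ y (subsetP Yc0 _ yY)); rewrite inE => /andP [yd _].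
  by move/setP: dY => /(_ y); rewrite !inE yd yY eqxx.
have cube : forall s, all (fun x => x \in Y) s -> c0 :\: [set x in s] \in C.
  elim=> [|y s IHs] /=.
    by move=> _; have -> : c0 :\: [set x in [::]] = c0 by apply/setP=> z; rewrite !inE.
  move=> /andP [yY sY].
  have -> : c0 :\: [set x in y :: s] = (c0 :\ y) :&: (c0 :\: [set x in s]).
    by apply/setP=> z; rewrite !inE; case: (z == y); case: (z \in c0); case: (z \in s).
  apply: CI; last exact: IHs.
  by have := subsetP Yex _ yY; rewrite inE => /andP [].
exists (c0 :\: Y) => W WY.
have -> : sd (c0 :\: Y) W = c0 :\: [set x in enum (Y :\: W)].
  apply/setP=> z; rewrite !inE mem_enum !inE.
  case zY: (z \in Y); last by rewrite (notin_sub WY zY) /= addbF.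
  by rewrite (subsetP Yc0) //=; case: (z \in W).
apply: cube; apply/allP=> z; rewrite mem_enum inE => /andP [].
by [].
Qed.

Lemma ca_remove C : cond_antimatroid C -> C != set0 ->
  exists2 c, c \in C & (C :\ c = set0 \/ cond_antimatroid (C :\ c)).
Proof.
case=> C0 CI Cex Cn0.
case: (arg_maxnP (fun d => #|d|) C0) => c cC cmax.
exists c => //.
case: (eqVneq (C :\ c) set0) => [->|Cc0]; [by left | right].
have dc : forall d, d \in C -> c \subset d -> d = c.
  move=> d dC cd; apply/eqP; rewrite eq_sym eqEcard cd; exact: cmax.
have c0 : c != set0.
  apply: contraNneq Cc0 => c0; apply/eqP/setP=> d; rewrite !inE.
  case: (eqVneq d c) => [//|dc'] /=; apply/negbTE/negP => dC; apply: (negP dc').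
  have le : #|d| <= #|c| := cmax d dC; move: le; by rewrite c0 cards0 leqn0 cards_eq0.
have exeq : forall d x, d \in C -> x \in d -> (d :\ x \in C :\ c) = (d :\ x \in C).
  move=> d x dC xd; rewrite !inE andbC; case: (d :\ x \in C) => //=.
  apply/eqP=> e; have le : #|d| <= #|c| := cmax d dC; move: le; rewrite -e (cardsD1 x d) xd.
  by rewrite add1n ltnn.
split.
- by rewrite !inE C0 eq_sym c0.
- move=> d e; rewrite !inE => /andP [dc' dC] /andP [ec' eC]; rewrite CI // andbT.
  apply/eqP=> e1; move: dc'; rewrite (dc d dC) ?eqxx //.
  by rewrite -e1 subsetIl.
move=> d; rewrite !inE => /andP [dc' dC].
have -> : ex_pts (C :\ c) d = ex_pts C d.
  by apply/setP=> x; rewrite !inE; case xd: (x \in d) => //=; have := exeq d x dC xd; rewrite !inE.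
have [h1 h2] := Cex d dC; split => // d' /setD1P [_ d'C]; exact: h2.
Qed.

Lemma part1 C : cond_antimatroid C -> dismantlable C.
Proof.
move=> caC.
apply: (@dismantle_gen (fun C => C = set0 \/ cond_antimatroid C)); last by right.
  by move=> D [->|]; [exact: set0_ample | exact: ca_ample].
move=> D [->|caD]; first by rewrite eqxx.
exact: ca_remove.
Qed.

End Ample.

Theorem proposition4p7 (T : finType) :
  (forall C : {set {set T}}, cond_antimatroid C -> dismantlable C) /\
  (forall C : {set {set T}}, ample C -> vc_dim C <= 2 -> dismantlable C).
Proof.
split; first exact: part1.
move=> C aC vC; apply: part2 => // Y shY.
apply: leq_trans vC; rewrite /vc_dim.
exact: (@leq_bigmax_cond _ (fun Y => shatters C Y) (fun Y => #|Y|) Y shY).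
Qed.
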